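(* Let $P$ be a rooted forest on $[n]$ with natural labeling. For $1\le i\le n$ let $G_i$ be the $\mathcal{L}(P)\times\mathcal{L}(P)$ $0$-$1$ matrix with $G_i(\pi',\pi)=1$ if and only if $\pi'=\pi\partial_{\pi^{-1}_i}$. Then the monoid $\mathcal{M}$ generated by $G_1,\dots,G_n$ under matrix multiplication is $\mathcal{R}$-trivial.
   Context: A rooted forest is a disjoint union of rooted trees, a rooted tree being a connected finite poset in which each element is covered by at most one element. $\mathcal{L}(P)=\{\pi\in S_n : i\prec j \Rightarrow \pi^{-1}_i<\pi^{-1}_j\}$ in one-line notation. $\pi\tau_i$ ($1\le i<n$) swaps $\pi_i,\pi_{i+1}$ if they are incomparable in $P$ and is $\pi$ otherwise; operators act on the right; $\partial_j=\tau_j\tau_{j+1}\cdots\tau_{n-1}$. (Equivalently $G_i$ is $\overline{M}=M+(x_1+\cdots+x_n)\mathbb{1}$ evaluated at $x_i=1$, $x_j=0$ for $j\ne i$, where $M$ is the promotion graph transition matrix.) A finite monoid $\mathcal{M}$ (with identity) is $\mathcal{R}$-trivial if $x\mathcal{M}=y\mathcal{M}$ implies $x=y$ for all $x,y\in\mathcal{M}$. *)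

(* Defs.v *)
From mathcomp Require Import all_boot all_order all_algebra all_fingroup.
Set Implicit Arguments. Unset Strict Implicit. Unset Printing Implicit Defensive.
Import GRing.Theory.
Local Open Scope ring_scope.

(* Posets on [n] are represented on 'I_n (element k stands for k+1),
   given by a boolean (reflexive) order relation [le]. *)
Section Promotion.
Variables (n : nat) (le : rel 'I_n).

Definition plt (x y : 'I_n) : bool := (x != y) && le x y.

Definition is_poset : Prop :=
  [/\ reflexive le, antisymmetric le & transitive le].

Definition covers (x y : 'I_n) : bool :=
  plt x y && [forall z, ~~ (plt x z && plt z y)].

(* rooted forest: every element is covered by at most one element
   (every finite poset is the disjoint union of its connected components,
   each of which then is a rooted tree) *)
Definition rooted_forest : Prop :=
  forall x y z, covers x y -> covers x z -> y = z.

Definition natural_labeling : Prop :=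
  forall i j, plt i j -> (i < j)%N.

Definition incomparable (x y : 'I_n) : bool := ~~ le x y && ~~ le y x.

(* One-line notation: pi_k = pi k (position k, 0-based); pi^-1_i = (pi^-1) i
   is the position of i. *)
Definition lin_ext (pi : 'S_n) : bool :=
  [forall i, forall j, plt i j ==> ((pi^-1)%g i < (pi^-1)%g j)%N].

Definition LP := [pred pi : 'S_n | lin_ext pi].

(* pi tau_(k+1) (0-based k): swap the entries at positions k, k+1 if they
   are incomparable; otherwise pi.  (tperm a b * pi)%g maps x to
   pi (tperm a b x). *)
Definition tau (pi : 'S_n) (k : nat) : 'S_n :=
  match insub k, insub k.+1 with
  | Some a, Some b =>
      if incomparable (pi a) (pi b) then (tperm a b * pi)%g else pi
  | _, _ => pi
  end.

(* pi partial_(p+1) = pi tau_(p+1) tau_(p+2) ... tau_(n-1), operators acting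
   on the right, p 0-based (so tau indices p, ..., n-2 0-based). *)
Definition partial (pi : 'S_n) (p : nat) : 'S_n :=
  foldl tau pi (iota p (n.-1 - p)).

Definition promo (i : 'I_n) (pi : 'S_n) : 'S_n := partial pi ((pi^-1)%g i).

(* Matrices indexed by L(P) x L(P) (via the enumeration enum_val of L(P)). *)
Definition Gmat (i : 'I_n) : 'M[int]_#|LP| :=
  \matrix_(a, b) ((enum_val a == promo i (enum_val b)) %:R).

Definition in_gen_monoid (A : 'M[int]_#|LP|) : Prop :=
  exists s : seq 'I_n, A = foldr (fun i B => Gmat i *m B) 1%:M s.

End Promotion.

(* R-triviality of a monoid of square matrices given by its membership
   predicate: xM = yM implies x = y. *)
Definition R_trivial (m : nat) (Mon : 'M[int]_m -> Prop) : Prop :=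
  forall x y, Mon x -> Mon y ->
    (forall A, (exists z, Mon z /\ A = x *m z) <-> (exists w, Mon w /\ A = y *m w)) ->
    x = y.

(* Main.v *)
Require Import Defs.
From mathcomp Require Import all_boot all_order all_algebra all_fingroup.
From mathcomp Require Import zify.
Set Implicit Arguments. Unset Strict Implicit. Unset Printing Implicit Defensive.
Import GRing.Theory.

Section S.
Variables (n : nat) (le : rel 'I_n).
Hypothesis Hpo : is_poset le.
Hypothesis Hrf : rooted_forest le.
Hypothesis Hnl : natural_labeling le.

Lemma le_refl x : le x x. Proof. by case: Hpo. Qed.
Lemma le_trans x y z : le x y -> le y z -> le x z.
Proof. case: Hpo => _ _ T; exact: T. Qed.
Lemma le_anti x y : le x y -> le y x -> x = y.
Proof. case: Hpo => _ A _ h1 h2; apply: A; by rewrite h1 h2. Qed.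

Lemma plt_le x y : plt le x y -> le x y. Proof. by case/andP. Qed.
Lemma plt_neq x y : plt le x y -> x != y. Proof. by case/andP. Qed.
Lemma plt_nat x y : plt le x y -> (x < y)%N. Proof. exact: Hnl. Qed.

Lemma cover_below x z : plt le x z -> exists y, covers le x y && le y z.
Proof.
move=> hxz.
have P0 : plt le x z && le z z by rewrite hxz le_refl.
case: (@arg_minnP _ z (fun y => plt le x y && le y z) (fun y : 'I_n => val y) P0) => y /andP[hxy hyz] hmin.
exists y; rewrite hyz andbT /covers hxy /=.
apply/forallP => w; apply/negP => /andP[hxw hwy].
have := hmin w; rewrite hxw (le_trans (plt_le hwy) hyz) => /(_ isT).
move=> /= h1; move: (plt_nat hwy) => /= h2; lia.
Qed.

Lemma cover_plt x y : covers le x y -> plt le x y. Proof. by case/andP. Qed.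

Lemma cover_uniq x y z : covers le x y -> covers le x z -> y = z.
Proof. exact: Hrf. Qed.

Lemma chain_aux k : forall i a b : 'I_n, (n - i <= k)%N -> le i a -> le i b -> le a b || le b a.
Proof.
elim: k => [|k IH] i a b hk hia hib; first by move: (ltn_ord i); lia.
case: (eqVneq a i) => [->|nai]; first by rewrite hib.
case: (eqVneq b i) => [->|nbi]; first by rewrite hia orbT.
have pa : plt le i a by rewrite /plt eq_sym nai hia.
have pb : plt le i b by rewrite /plt eq_sym nbi hib.
case: (cover_below pa) => y /andP[cy ya].
case: (cover_below pb) => y' /andP[cy' yb].
rewrite -(cover_uniq cy cy') in yb.
apply: (IH y) => //.
move: (plt_nat (cover_plt cy)) (ltn_ord y) => h1 h2; lia.
Qed.

Lemma chain i a b : le i a -> le i b -> le a b || le b a.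
Proof. exact: (@chain_aux n i a b (leq_subr _ _)). Qed.


Definition pos (pi : 'S_n) (e : 'I_n) : nat := (pi^-1)%g e.

Definition Gc (i c e : 'I_n) : 'I_n :=
  if le i e && plt le e c then odflt e [pick y | covers le e y] else e.

Definition Fpos (pi : 'S_n) (i c : 'I_n) (q : nat) (e : 'I_n) : nat :=
  if e == c then q else
  let r := pos pi (Gc i c e) in if (pos pi i < r <= q)%N then r.-1 else r.

Definition Inv (pi : 'S_n) (i : 'I_n) (q : nat) (w : 'S_n) (c : 'I_n) : Prop :=
  [/\ (q < n)%N, le i c, (pos pi c <= q)%N,
      (forall e, (pos pi c < pos pi e <= q)%N -> incomparable le c e)
    & forall e, pos w e = Fpos pi i c q e].

Lemma pos_inj pi : injective (pos pi).
Proof. by move=> x y /val_inj /perm_inj. Qed.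

Lemma posK pi (k : 'I_n) : pos pi (pi k) = k.
Proof. by rewrite /pos permK. Qed.

Lemma pos_lt pi e : (pos pi e < n)%N.
Proof. exact: ltn_ord. Qed.

Lemma linP pi : lin_ext le pi -> forall a b, plt le a b -> (pos pi a < pos pi b)%N.
Proof. move=> /forallP h a b; move: (h a) => /forallP /(_ b) /implyP; exact. Qed.

Lemma Gc_cases i c e : Gc i c e = e \/ [/\ le i e, plt le e c & covers le e (Gc i c e)].
Proof.
rewrite /Gc; case: ifP => [/andP[h1 h2]|]; last by left.
case: pickP => [y hy|]; last by left.
by right; split.
Qed.

Lemma Gc_cover i c e y : le i e -> plt le e c -> covers le e y -> Gc i c e = y.
Proof.
move=> h1 h2 hy; rewrite /Gc h1 h2 /=.
case: pickP => [y' hy'|/(_ y)]; last by rewrite hy.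
exact: cover_uniq hy' hy.
Qed.

Lemma Gc_id i c e : ~~ (le i e && plt le e c) -> Gc i c e = e.
Proof. by rewrite /Gc => /negbTE ->. Qed.


Lemma le_pos pi a b : lin_ext le pi -> le a b -> (pos pi a <= pos pi b)%N.
Proof.
move=> hpi hab; case: (eqVneq a b) => [->//|nab].
by apply: ltnW; apply: linP => //; rewrite /plt nab hab.
Qed.

Lemma Inv_init pi i : Inv pi i (pos pi i) pi i.
Proof.
split => //; [exact: pos_lt| exact: le_refl| by move=> e; lia|].
move=> e; rewrite /Fpos; case: eqVneq => [->//|nei].
rewrite Gc_id; last first.
  apply/negP => /andP[h1 /andP[h2 h3]]; by rewrite (le_anti h1 h3) eqxx in h2.
by case: ifP => //; lia.
Qed.

Lemma tau_step pi i q w c : lin_ext le pi -> Inv pi i q w c -> (q.+1 < n)%N ->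
  exists c', Inv pi i q.+1 (tau le w q) c'.
Proof.
move=> hpi [hq hic hcq hinc hw] hq1.
have hpc : (pos pi i <= pos pi c)%N by apply: le_pos.
pose a := Ordinal hq; pose b := Ordinal hq1.
pose y := pi b.
have hy : pos pi y = q.+1 by rewrite posK.
have hwc : w a = c.
  have h : pos w c = q by rewrite hw /Fpos eqxx.
  have -> : a = (w^-1)%g c by apply: val_inj; rewrite /= -h.
  by rewrite permKV.
have hyc : y != c by apply/eqP => e; move: hcq; rewrite -e hy ltnn.
have hGy : Gc i c y = y.
  apply: Gc_id; apply/negP => /andP[_ h]; move: (linP hpi h); rewrite hy; lia.
have hwy : w b = y.
  have h : pos w y = q.+1 by rewrite hw /Fpos (negbTE hyc) hGy hy; case: ifP => //; lia.
  have -> : b = (w^-1)%g y by apply: val_inj; rewrite /= -h.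
  by rewrite permKV.
rewrite /tau (insubT (fun m => m < n)%N hq) (insubT (fun m => m < n)%N hq1) /=.
have -> : (Sub q hq : 'I_n) = a by [].
have -> : (Sub q.+1 hq1 : 'I_n) = b by [].
rewrite hwc hwy; case: ifP => hcy.
- exists c; split => //; first by lia.
  + move=> e he; case: (eqVneq (pos pi e) q.+1) => h.
      by rewrite (pos_inj (etrans h (esym hy))).
    by apply: hinc; lia.
  + move=> e; rewrite /pos invMg tpermV permM.
    case: (eqVneq e c) => [->|nec].
      have -> : (w^-1)%g c = a by rewrite -hwc permK.
      by rewrite tpermL /Fpos eqxx.
    case: (eqVneq e y) => [->|ney].
      have -> : (w^-1)%g y = b by rewrite -hwy permK.
      rewrite tpermR /Fpos (negbTE hyc) hGy hy /=.
      by case: ifP => //; lia.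
    rewrite tpermD; first last.
    * by apply/eqP => /(congr1 w); rewrite permKV hwy => h; rewrite h eqxx in ney.
    * by apply/eqP => /(congr1 w); rewrite permKV hwc => h; rewrite h eqxx in nec.
    have := hw e; rewrite /pos => ->; rewrite /Fpos (negbTE nec).
    have hr : pos pi (Gc i c e) != q.+1.
      apply/eqP => h0; have hG : Gc i c e = y by exact: (pos_inj (etrans h0 (esym hy))).
      case: (Gc_cases i c e) => [hGe|[h1 h2 h3]].
        by move: ney; rewrite -hGe hG eqxx.
      rewrite hG in h3.
      have hey : le e y by exact: plt_le (cover_plt h3).
      move: hcy; rewrite /incomparable.
      by case/orP: (@chain e c y (plt_le h2) hey) => ->; rewrite ?andbF.
    move: hr; rewrite /pos; move: (val ((pi^-1)%g (Gc i c e))) => r hr.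
    case: ifP; case: ifP => //; lia.
- have hcy' : plt le c y.
    move/negbT: hcy; rewrite /incomparable negb_and !negbK => /orP[h|h].
      by rewrite /plt eq_sym hyc h.
    have : plt le y c by rewrite /plt hyc h.
    move/(linP hpi); rewrite hy; lia.
  have hcov : covers le c y.
    rewrite /covers hcy' /=; apply/forallP => z; apply/negP => /andP[hcz hzy].
    move: (linP hpi hcz) (linP hpi hzy) => h1 h2.
    have := hinc z; rewrite h1 /= => /(_ ltac:(lia)).
    by rewrite /incomparable (plt_le hcz).
  exists y; split => //.
  + exact: le_trans hic (plt_le hcy').
  + by rewrite hy.
  + by move=> e; rewrite hy; lia.
  move=> e; rewrite hw.
  case: (eqVneq e y) => [->|ney].
    by rewrite /Fpos eqxx (negbTE hyc) hGy hy; case: ifP => //; lia.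
  case: (eqVneq e c) => [->|nec].
    rewrite /Fpos eqxx eq_sym (negbTE hyc) (Gc_cover hic hcy' hcov) hy.
    by case: ifP => //; lia.
  have hG : Gc i y e = Gc i c e.
    rewrite /Gc; congr (if _ then _ else _).
    case hie: (le i e) => //=.
    apply/idP/idP => h.
    * rewrite /plt nec /=.
      case/orP: (chain hie hic) => // hce.
      have : plt le c e by rewrite /plt eq_sym nec hce.
      move=> hce'; move: hcov => /andP[_ /forallP /(_ e)]; by rewrite hce' h.
    * by rewrite /plt ney /= (le_trans (plt_le h) (plt_le hcy')).
  rewrite /Fpos (negbTE ney) (negbTE nec) hG.
  have hr : pos pi (Gc i c e) != q.+1.
    apply/eqP => h0; have hGe : Gc i c e = y by exact: (pos_inj (etrans h0 (esym hy))).
    case: (Gc_cases i c e) => [hGe'|[h1 h2 h3]].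
      by move: ney; rewrite -hGe' hGe eqxx.
    rewrite hGe in h3; move: h3 => /andP[_ /forallP /(_ c)].
    by rewrite h2 hcy'.
  move: hr; move: (pos pi (Gc i c e)) => r hr.
  case: ifP; case: ifP => //; lia.
Qed.


Lemma promo_inv pi i : lin_ext le pi -> exists c, Inv pi i n.-1 (promo le i pi) c.
Proof.
move=> hpi.
have hp : (pos pi i < n)%N := pos_lt pi i.
suff H : forall k, (k <= n.-1 - pos pi i)%N ->
    exists c, Inv pi i (pos pi i + k) (foldl (tau le) pi (iota (pos pi i) k)) c.
  have [c hc] := H _ (leqnn _).
  exists c; have E : (pos pi i + (n.-1 - pos pi i) = n.-1)%N by lia.
  by rewrite E in hc.
elim => [|k IH] hk.
  by exists i; rewrite addn0 /=; exact: Inv_init.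
have [c hc] := IH (ltnW hk).
rewrite -addn1 iotaD foldl_cat /= addn1 addnS.
apply: tau_step; [by []|exact: hc|lia].
Qed.

Lemma Inv_root pi i w c : lin_ext le pi -> Inv pi i n.-1 w c -> forall y, ~~ covers le c y.
Proof.
move=> hpi [hq hic hcq hinc hw] y; apply/negP => hcy.
move: (pos_lt pi y) (linP hpi (cover_plt hcy)) => h1 h2.
have hin : (pos pi c < pos pi y <= n.-1)%N by lia.
by move: (hinc y hin); rewrite /incomparable (plt_le (cover_plt hcy)).
Qed.


Definition gi (i e : 'I_n) : option 'I_n :=
  if le i e then [pick y | covers le e y] else Some e.

Definition klt1 (pi : 'S_n) (o1 o2 : option 'I_n) : bool :=
  match o1, o2 with
  | Some u, Some v => (pos pi u < pos pi v)%N
  | Some _, None => true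
  | None, _ => false
  end.

Lemma gi_le i e u : gi i e = Some u -> le e u.
Proof.
rewrite /gi; case: ifP => _; last by case=> ->; exact: le_refl.
by case: pickP => // y /cover_plt /plt_le h [<-].
Qed.

Lemma gi_neq i e : gi i e != Some i.
Proof.
apply/eqP; rewrite /gi; case: ifP => hie; last by case=> h; rewrite h le_refl in hie.
case: pickP => // y hy [hyi]; rewrite hyi in hy.
move/cover_plt: hy => /andP[ne hei]; by rewrite (le_anti hei hie) eqxx in ne.
Qed.

Lemma gi_final pi i w c : lin_ext le pi -> Inv pi i n.-1 w c ->
  gi i c = None /\ forall e, e != c -> gi i e = Some (Gc i c e).
Proof.
move=> hpi hI; have hr := Inv_root hpi hI.
case: hI => hq hic _ _ _; split.
  rewrite /gi hic; case: pickP => // y hy; by move: (hr y); rewrite hy.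
move=> e nec; rewrite /gi; case: ifP => hie; last by rewrite Gc_id // hie.
case/orP: (chain hie hic) => hce.
  have hpe : plt le e c by rewrite /plt nec hce.
  case: (cover_below hpe) => y /andP[hy _].
  rewrite (Gc_cover hie hpe hy); case: pickP => [y' hy'|/(_ y)]; last by rewrite hy.
  by rewrite (cover_uniq hy' hy).
have hpc : plt le c e by rewrite /plt eq_sym nec hce.
case: (cover_below hpc) => y /andP[hy _]; by move: (hr y); rewrite hy.
Qed.

Lemma promo_before pi i e e' : lin_ext le pi ->
  (pos (promo le i pi) e < pos (promo le i pi) e')%N = klt1 pi (gi i e) (gi i e').
Proof.
move=> hpi; have [c hI] := promo_inv i hpi.
have [hgc hge] := gi_final hpi hI.
case: (hI) => hq _ _ _ hw.
have hp := pos_lt pi i.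
have rne : forall x, x != c -> pos pi (Gc i c x) != pos pi i.
  move=> x nx; apply/eqP => /pos_inj h; move: (gi_neq i x); by rewrite hge // h eqxx.
rewrite !hw /Fpos.
case: (eqVneq e c) => [->|nec]; case: (eqVneq e' c) => [->|nec'];
  rewrite ?hgc ?hge //= ?ltnn //.
- move: (pos_lt pi (Gc i c e')) => h; case: ifP => ?; lia.
- move: (pos_lt pi (Gc i c e)) (rne e nec) => h /eqP h'; case: ifP => ?; lia.
- move: (pos_lt pi (Gc i c e)) (rne e nec) (pos_lt pi (Gc i c e')) (rne e' nec') => h1 /eqP h1' h2 /eqP h2'.
  case: ifP; case: ifP => ? ?; lia.
Qed.

Lemma promo_lin pi i : lin_ext le pi -> lin_ext le (promo le i pi).
Proof.
move=> hpi; apply/forallP => e; apply/forallP => e'; apply/implyP => hee'.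
rewrite -[X in (X < _)%N]/(pos _ e) -[X in (_ < X)%N]/(pos _ e') promo_before //.
have hnn : gi i e != None.
  rewrite /gi; case: ifP => // hie; case: pickP => // hnone.
  case: (cover_below hee') => y /andP[hy _]; by move: (hnone y); rewrite hy.
case he: (gi i e) => [u|]; case he': (gi i e') => [v|] //=.
- move: he he'; rewrite /gi.
  case: ifP => hie; case: ifP => hie'.
  + case: pickP => // y hy [<-]; case: pickP => // y' hy' [<-].
    apply: linP => //.
    have hey' : le e y' := le_trans (plt_le hee') (plt_le (cover_plt hy')).
    case/orP: (chain (plt_le (cover_plt hy)) hey') => hyy'.
      rewrite /plt hyy' andbT; apply/eqP => eyy.
      rewrite eyy in hy.
      by move: hy => /andP[_ /forallP /(_ e')]; rewrite hee' cover_plt.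
    have ne'y : e' != y.
      apply/eqP => h; have hyy := cover_plt hy'; rewrite h in hyy.
      by move: (hyy); rewrite /plt (le_anti (plt_le hyy) hyy') eqxx.
    have h : plt le e' y by rewrite /plt ne'y (le_trans (plt_le (cover_plt hy')) hyy').
    by move: hy => /andP[_ /forallP /(_ e')]; rewrite hee' h.
  + by rewrite (le_trans hie (plt_le hee')) in hie'.
  + case=> <-; case: pickP => // y' hy' [<-].
    by apply: linP => //; rewrite /plt; apply/andP; split;
      [apply/eqP => h; move: (plt_nat hee') (plt_nat (cover_plt hy')); rewrite h; lia
      | exact: le_trans (plt_le hee') (plt_le (cover_plt hy'))].
  + by case=> <- [<-]; apply: linP.
- by rewrite he in hnn.
- by rewrite he in hnn.
Qed.


Fixpoint key (s : seq 'I_n) (e : 'I_n) : 'I_n + nat :=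
  match s with
  | [::] => inl e
  | i :: s' => match gi i e with Some u => key s' u | None => inr (size s') end
  end.

Definition klt (pi : 'S_n) (k1 k2 : 'I_n + nat) : bool :=
  match k1, k2 with
  | inl u, inl v => (pos pi u < pos pi v)%N
  | inl _, inr _ => true
  | inr _, inl _ => false
  | inr a, inr b => (a < b)%N
  end.

Definition Fs (s : seq 'I_n) (pi : 'S_n) : 'S_n := foldr (fun i p => promo le i p) pi s.

Lemma key_lt s e t : key s e = inr t -> (t < size s)%N.
Proof.
elim: s e => [//|i s IH] e /=.
case: (gi i e) => [u /IH|[<-]] /=; lia.
Qed.

Lemma Fs_before s pi : lin_ext le pi -> lin_ext le (Fs s pi) /\
  forall e e', (pos (Fs s pi) e < pos (Fs s pi) e')%N = klt pi (key s e) (key s e').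
Proof.
move=> hpi; elim: s => [|i s [hl IH]] //=.
split; first exact: promo_lin.
move=> e e'; rewrite promo_before //.
case: (gi i e) => [u|]; case: (gi i e') => [v|] //=.
- case hk: (key s u) => [x|t] //=; by move: (key_lt hk) => h; lia.
- case hk: (key s v) => [x|t] //=; by move: (key_lt hk) => h; lia.
- by rewrite ltnn.
Qed.

Lemma key_cat p q e : key (p ++ q) e =
  match key p e with inl h => key q h | inr t => inr (t + size q)%N end.
Proof.
elim: p e => [//|i p IH] e /=.
case: (gi i e) => [u|] //=; by rewrite size_cat.
Qed.

Lemma Fs_cat p q pi : Fs (p ++ q) pi = Fs p (Fs q pi).
Proof. by rewrite /Fs foldr_cat. Qed.

Lemma key_le s e h : key s e = inl h -> le e h.
Proof.
elim: s e => [|i s IH] e /=; first by case=> <-; exact: le_refl.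
case hg: (gi i e) => [u|] // /IH h'; exact: le_trans (gi_le hg) h'.
Qed.

Fixpoint cp (c : seq 'I_n) k := if k is k'.+1 then cp c k' ++ c else [::].

Lemma key_cp c k e h : key (cp c k) e = inl h -> key c h = inl h \/ (k <= h)%N.
Proof.
elim: k e h => [|k IH] e h /=; first by right.
rewrite key_cat; case hk: (key (cp c k) e) => [h0|t] // hc.
have hle := key_le hc.
case: (IH _ _ hk) => [hf|hkh].
  by left; rewrite hf in hc; case: hc => <-.
case: (eqVneq h0 h) => [e0|ne].
  by left; rewrite -e0 in hc *.
right; have : plt le h0 h by rewrite /plt ne hle.
move/plt_nat; lia.
Qed.

Lemma key_fix a b h : key (a ++ b) h = inl h -> key a h = inl h.
Proof.
rewrite key_cat; case hk: (key a h) => [h1|//] hb.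
by rewrite (le_anti (key_le hk) (key_le hb)).
Qed.

Lemma card_lt k : (k <= n)%N -> #|[pred j : 'I_n | (j < k)%N]| = k.
Proof.
elim: k => [|k IH] hk.
  by apply: eq_card0 => j /=.
rewrite (cardD1 (Ordinal hk)) inE /= ltnSn add1n; congr _.+1.
rewrite -[RHS](IH (ltnW hk)).
apply: eq_card => j; rewrite !inE -val_eqE /= ltnS leq_eqVlt.
by case: ltngtP.
Qed.

Lemma card_before (s : 'S_n) e : #|[pred e' | (pos s e' < pos s e)%N]| = pos s e.
Proof.
rewrite -[RHS](card_lt (ltnW (pos_lt s e))).
rewrite -cardsE -(card_preimset _ (@perm_inj _ s)).
apply: eq_card => j; by rewrite !inE posK.
Qed.

Lemma perm_before (s t : 'S_n) :
  (forall e e', (pos s e < pos s e')%N = (pos t e < pos t e')%N) -> s = t.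
Proof.
move=> H; have h : forall e, pos s e = pos t e.
  by move=> e; rewrite -card_before -[RHS]card_before; apply: eq_card => j; rewrite !inE H.
apply: (@invg_inj _ s t); apply/permP => e; apply: val_inj; exact: h.
Qed.

Lemma main_eq a b pi : lin_ext le pi ->
  Fs (cp (a ++ b) n ++ a) pi = Fs (cp (a ++ b) n) pi.
Proof.
move=> hpi; apply: perm_before => e e'.
have [_ H1] := Fs_before (cp (a ++ b) n ++ a) hpi.
have [_ H2] := Fs_before (cp (a ++ b) n) hpi.
rewrite H1 H2 !key_cat.
have fixa : forall x h, key (cp (a ++ b) n) x = inl h -> key a h = inl h.
  move=> x h hx; case: (key_cp hx) => [/key_fix //|]; by move: (ltn_ord h); lia.
case hx: (key (cp (a ++ b) n) e) => [h|t]; case hx': (key (cp (a ++ b) n) e') => [h'|t'];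
  rewrite ?(fixa _ _ hx) ?(fixa _ _ hx') //=; lia.
Qed.


Local Open Scope ring_scope.

Definition Mw (s : seq 'I_n) : 'M[int]_#|LP le| :=
  foldr (fun i B => Gmat le i *m B) 1%:M s.

Lemma Mw_cat p q : Mw (p ++ q) = Mw p *m Mw q.
Proof.
elim: p => [|i p IH] /=; first by rewrite mul1mx.
by rewrite IH mulmxA.
Qed.

Lemma LP_lin pi : (pi \in LP le) = lin_ext le pi.
Proof. by []. Qed.

Lemma Mw_F s : Mw s = \matrix_(a, b) ((enum_val a == Fs s (enum_val b))%:R).
Proof.
elim: s => [|i s IH] /=.
  apply/matrixP => a b; rewrite !mxE /=.
  by rewrite (inj_eq enum_val_inj).
rewrite IH; apply/matrixP => a b; rewrite !mxE.
have hin : Fs s (enum_val b) \in LP le.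
  rewrite LP_lin; have := enum_valP b; rewrite LP_lin => h.
  by case: (Fs_before s h).
pose j0 := enum_rank_in hin (Fs s (enum_val b)).
have hj0 : enum_val j0 = Fs s (enum_val b) by rewrite enum_rankK_in.
rewrite (bigD1 j0) //= big1; last first.
  move=> j nj; rewrite !mxE.
  have -> : (enum_val j == Fs s (enum_val b)) = false.
    by apply/negbTE; rewrite -hj0 (inj_eq enum_val_inj).
  by rewrite mulr0.
by rewrite !mxE hj0 eqxx mulr1 addr0.
Qed.

Lemma Mw_eq s1 s2 : (forall pi, lin_ext le pi -> Fs s1 pi = Fs s2 pi) -> Mw s1 = Mw s2.
Proof.
move=> H; rewrite !Mw_F; apply/matrixP => a b; rewrite !mxE H //.
by have := enum_valP b; rewrite LP_lin.
Qed.

End S.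

Close Scope ring_scope.
Theorem theorem6p9 (n : nat) (le : rel 'I_n) :
  is_poset le -> rooted_forest le -> natural_labeling le ->
  R_trivial (@in_gen_monoid n le).
Proof.
Local Open Scope ring_scope.
move=> Hpo Hrf Hnl x y [sx ->] [sy ->] H.
have gm : forall s, in_gen_monoid (Mw le s) by move=> s; exists s.
have [w [[sw ->] hxw]] : exists w, in_gen_monoid w /\ Mw le sx = Mw le sy *m w.
  have := (H (Mw le sx)).1; case.
    by exists (Mw le [::]); split; [exact: gm | rewrite mulmx1].
  by move=> w [hw e]; exists w.
have [z [[sz ->] hyz]] : exists z, in_gen_monoid z /\ Mw le sy = Mw le sx *m z.
  have := (H (Mw le sy)).2; case.
    by exists (Mw le [::]); split; [exact: gm | rewrite mulmx1].
  by move=> z [hz e]; exists z.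
pose c := sz ++ sw.
have hc : forall k, Mw le sx = Mw le sx *m Mw le (cp c k).
  elim => [|k IH] /=; first by rewrite mulmx1.
  by rewrite Mw_cat mulmxA -IH /c Mw_cat mulmxA -hyz -hxw.
change (Mw le sx = Mw le sy).
rewrite hyz {2}(hc n) -mulmxA.
change (Mw le sx = Mw le sx *m (Mw le (cp c n) *m Mw le sz)).
rewrite -Mw_cat (Mw_eq Hpo Hrf Hnl (fun pi hpi => main_eq Hpo Hrf Hnl sz sw hpi)).
by rewrite -hc.
Qed.
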